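(* For every integer $n\geq 1$, the polynomial $Q_n(x,y,z,t)$ satisfies the identity of polynomials $$Q_n(x,y,z,t)=Q_n(x+nz+nt,\,y,\,-t,\,-z).$$
   Context: The polynomials $Q_n=Q_n(x,y,z,t)\in\mathbb{Z}[x,y,z,t]$ are defined by $Q_1=1$ and, for $n\geq 1$, $$Q_{n+1}=\bigl[x+nz+(y+t)\bigl(n+y\,\partial_y\bigr)\bigr]Q_n,$$ where $\partial_y$ denotes partial differentiation with respect to $y$. *)

(* Defs.v *)
From mathcomp Require Import all_boot all_order all_algebra.
From mathcomp Require Import mpoly.
Set Implicit Arguments. Unset Strict Implicit. Unset Printing Implicit Defensive.
Import GRing.Theory.
Local Open Scope ring_scope.

Definition vx : 'I_4 := inord 0.
Definition vy : 'I_4 := inord 1.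
Definition vz : 'I_4 := inord 2.
Definition vt : 'I_4 := inord 3.

Definition PX : {mpoly int[4]} := 'X_vx.
Definition PY : {mpoly int[4]} := 'X_vy.
Definition PZ : {mpoly int[4]} := 'X_vz.
Definition PT : {mpoly int[4]} := 'X_vt.

Definition Qstep (n : nat) (P : {mpoly int[4]}) : {mpoly int[4]} :=
  (PX + PZ *+ n) * P + (PY + PT) * (P *+ n + PY * (P ^`M (vy))).

(* Qaux k = Q_{k+1}. *)
Fixpoint Qaux (k : nat) : {mpoly int[4]} :=
  match k with
  | 0 => 1
  | k'.+1 => Qstep k'.+1 (Qaux k')
  end.

(* Q n = Q_n for n >= 1 (Q 0 is a dummy value, never used). *)
Definition Q (n : nat) : {mpoly int[4]} := Qaux n.-1.

(* Main.v *)
Require Import Defs.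
From mathcomp Require Import all_boot all_order all_algebra.
From mathcomp Require Import mpoly.
From mathcomp Require Import ring.
Import GRing.Theory.
Local Open Scope ring_scope.

Lemma mp_ind (P : {mpoly int[4]} -> Prop) :
  (forall c, P c%:MP) -> (forall i, P 'X_i) ->
  (forall p q, P p -> P q -> P (p + q)) ->
  (forall p q, P p -> P q -> P (p * q)) -> forall p, P p.
Proof.
move=> hC hX hD hM; apply: mpolyind.
  by rewrite -mpolyC0; apply: (hC).
move=> c m p _ _ Hp; apply: (hD) => //.
rewrite -mul_mpolyC; apply: (hM) => //.
rewrite mpolyXE_id; apply: (big_ind P).
- by rewrite -mpolyC1; apply: (hC).
- move=> ? ? ? ?; exact: (hM).
- move=> i _; elim: (m i) => [|k IH].
    by rewrite expr0 -mpolyC1; apply: (hC).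
  by rewrite exprS; apply: (hM).
Qed.

Lemma comp_comp (f a b c d : {mpoly int[4]}) (lr : 4.-tuple {mpoly int[4]}) :
  (f \mPo [tuple a; b; c; d]) \mPo lr =
  f \mPo [tuple a \mPo lr; b \mPo lr; c \mPo lr; d \mPo lr].
Proof.
elim/mp_ind: f.
- by move=> e; rewrite !comp_mpolyC.
- move=> i; rewrite !comp_mpolyXU.
  case: i => [[|[|[|[|i]]]] Hi] //=.
- by move=> p q Hp Hq; rewrite !rmorphD /= Hp Hq.
- by move=> p q Hp Hq; rewrite !rmorphM /= Hp Hq.
Qed.

Lemma dXi (i j : 'I_4) : 'X_i^`M(j) = if i == j then 1 else 0 :> {mpoly int[4]}.
Proof.
rewrite mderivX mnm1E; case: eqP => [->|_].
  have -> : (U_(j) - U_(j) = 0)%MM by apply/mnmP=> k; rewrite mnmBE subnn mnm0E.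
  by rewrite scale1r mpolyX0.
by rewrite scale0r.
Qed.

Definition tauT : 4.-tuple {mpoly int[4]} := [tuple PX + PZ + PT; PY; PZ; PT].
Definition tau (f : {mpoly int[4]}) := f \mPo tauT.
Definition sigT (n : nat) : 4.-tuple {mpoly int[4]} :=
  [tuple PX + PZ *+ n + PT *+ n; PY; - PT; - PZ].
Definition Dn (n : nat) (h : {mpoly int[4]}) := h *+ n + PY * h^`M(vy).

Lemma cPX (a b c d : {mpoly int[4]}) : PX \mPo [tuple a; b; c; d] = a.
Proof. by rewrite /PX comp_mpolyXU /vx inordK. Qed.
Lemma cPY (a b c d : {mpoly int[4]}) : PY \mPo [tuple a; b; c; d] = b.
Proof. by rewrite /PY comp_mpolyXU /vy inordK. Qed.
Lemma cPZ (a b c d : {mpoly int[4]}) : PZ \mPo [tuple a; b; c; d] = c.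
Proof. by rewrite /PZ comp_mpolyXU /vz inordK. Qed.
Lemma cPT (a b c d : {mpoly int[4]}) : PT \mPo [tuple a; b; c; d] = d.
Proof. by rewrite /PT comp_mpolyXU /vt inordK. Qed.

Lemma dPX : PX^`M(vy) = 0. Proof. by rewrite /PX dXi -val_eqE /vx /vy /= !inordK. Qed.
Lemma dPY : PY^`M(vy) = 1. Proof. by rewrite /PY dXi eqxx. Qed.
Lemma dPZ : PZ^`M(vy) = 0. Proof. by rewrite /PZ dXi -val_eqE /vz /vy /= !inordK. Qed.
Lemma dPT : PT^`M(vy) = 0. Proof. by rewrite /PT dXi -val_eqE /vt /vy /= !inordK. Qed.

Lemma ord4 (i : 'I_4) : [\/ i = vx, i = vy, i = vz | i = vt].
Proof.
case: i => [[|[|[|[|i]]]] Hi] //.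
- by apply: Or41; apply/val_inj; rewrite /= inordK.
- by apply: Or42; apply/val_inj; rewrite /= inordK.
- by apply: Or43; apply/val_inj; rewrite /= inordK.
- by apply: Or44; apply/val_inj; rewrite /= inordK.
Qed.

Lemma d1 : (1 : {mpoly int[4]})^`M(vy) = 0.
Proof. by rewrite -mpolyC1 mderivC. Qed.

Lemma comp_deriv (f a c d : {mpoly int[4]}) :
  a^`M(vy) = 0 -> c^`M(vy) = 0 -> d^`M(vy) = 0 ->
  (f \mPo [tuple a; PY; c; d])^`M(vy) = (f^`M(vy)) \mPo [tuple a; PY; c; d].
Proof.
move=> ha hc hd; elim/mp_ind: f.
- by move=> e; rewrite comp_mpolyC !mderivC comp_mpoly0.
- move=> i; case: (ord4 i) => ->; rewrite -/PX -/PY -/PZ -/PT.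
  + by rewrite cPX dPX comp_mpoly0.
  + by rewrite cPY dPY comp_mpoly1.
  + by rewrite cPZ dPZ comp_mpoly0.
  + by rewrite cPT dPT comp_mpoly0.
- by move=> p q Hp Hq; rewrite !(rmorphD, mderivD) /= Hp Hq.
- by move=> p q Hp Hq; rewrite !(rmorphM, mderivM, rmorphD) /= Hp Hq.
Qed.

Lemma tau_d f : (tau f)^`M(vy) = tau (f^`M(vy)).
Proof.
by rewrite /tau /tauT comp_deriv // ?(mderivD, dPX, dPZ, dPT, addr0).
Qed.

Lemma tau1 : tau 1 = 1. Proof. exact: comp_mpoly1. Qed.

Lemma tau_step n f : tau (Qstep n f) = Qstep n (tau f) + (PZ + PT) * tau f.
Proof.
rewrite /Qstep /tau !(rmorphD, rmorphM, rmorphMn) /= -/(tau _) tau_d.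
rewrite /tauT cPX cPY cPZ cPT.
ring.
Qed.

Lemma QstepB n f g : Qstep n f - Qstep n g = Qstep n (f - g).
Proof. rewrite /Qstep mderivB; ring. Qed.

Lemma keyA k : tau (Qaux k.+1) - Qaux k.+1 = (PZ + PT) * Dn k.+1 (tau (Qaux k)).
Proof.
elim: k => [|k IH].
  rewrite /= tau_step tau1 /Qstep /Dn d1; ring.
have -> : Qaux k.+2 = Qstep k.+2 (Qaux k.+1) by [].
have Eh : tau (Qaux k.+1) = Qstep k.+1 (tau (Qaux k)) + (PZ + PT) * tau (Qaux k).
  exact: tau_step.
rewrite tau_step -addrA [_ * _ + _]addrC addrA QstepB IH Eh.
set g := tau (Qaux k).
rewrite /Qstep /Dn !(mderivD, mderivM, mderivMn, dPX, dPY, dPZ, dPT).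
ring.
Qed.

Lemma sig_d n f : (f \mPo sigT n)^`M(vy) = (f^`M(vy)) \mPo sigT n.
Proof.
by rewrite /sigT comp_deriv // ?(mderivD, mderivN, mderivMn, dPX, dPZ, dPT, mul0rn, addr0, oppr0).
Qed.

Lemma sig_tau n f : tau (f \mPo sigT n) = f \mPo sigT n.+1.
Proof.
rewrite /tau /sigT comp_comp /tauT !(rmorphD, rmorphN, rmorphMn) /= cPX cPY cPZ cPT.
have -> : PX + PZ + PT + PZ *+ n + PT *+ n = PX + PZ *+ n.+1 + PT *+ n.+1.
  by rewrite !mulrS; ring.
by [].
Qed.

Lemma mainQ k : Qaux k \mPo sigT k.+1 = Qaux k.
Proof.
elim: k => [|k IH]; first exact: comp_mpoly1.
have -> : Qaux k.+1 = Qstep k.+1 (Qaux k) by [].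
have E := keyA k; rewrite /= tau_step in E.
have E2 : Qstep k.+1 (Qaux k) = Qstep k.+1 (tau (Qaux k)) + (PZ + PT) * tau (Qaux k)
   - (PZ + PT) * Dn k.+1 (tau (Qaux k)).
  by rewrite -E; ring.
rewrite [in RHS]E2.
set f := Qaux k. set g := tau f.
rewrite [Qstep _ f]/Qstep.
have Hf : f \mPo sigT k.+2 = g by rewrite -sig_tau IH.
rewrite !(rmorphD, rmorphM, rmorphMn) /= -sig_d Hf.
rewrite /sigT cPX cPY cPZ cPT /Qstep /Dn.
ring.
Qed.

Theorem theorem1p1 (n : nat) : (1 <= n)%N ->
  Q n = Q n \mPo [tuple PX + PZ *+ n + PT *+ n; PY; - PT; - PZ].
Proof.
case: n => [//|k] _.
by rewrite /Q /= -[in LHS](mainQ k).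
Qed.
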